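(* There is an absolute constant $c$ such that the following holds. Let $q\ge1$, $M>0$, $\alpha=2^{q+1}+8$, and let $\{J_i\}_{i=1}^m$ be an assignment satisfying $$\sum_{i=1}^m\Big(\sum_{j\in J_i}\mathbb{E}[X'_{ij}]\Big)^q\le 2^{q+2}M^q\qquad\text{and}\qquad\sum_{i=1}^m\sum_{j\in J_i}\mathbb{E}[(X'_{ij})^q]\le 3\alpha M^q.$$ Then $\mathbb{E}\Big[\big(\sum_{i=1}^m(\sum_{j\in J_i}X'_{ij})^q\big)^{1/q}\Big]\le c\cdot\frac{q}{\ln(q+1)}\cdot M$.
   Context: Nonnegative random variables $X_{ij}$ (size of job $j$ on machine $i$), with $X_{ij}$ and $X_{i'j'}$ independent whenever $j\ne j'$. Truncated part relative to $M$: $X'_{ij}:=X_{ij}\mathbf{1}[X_{ij}\le M]$. An assignment is a partition $\{J_i\}_{i=1}^m$ of $[n]$. *)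

(* Defs.v *)
From HB Require Import structures.
From mathcomp Require Import all_boot all_order all_algebra.
From mathcomp Require Import all_classical all_reals all_analysis.
Set Implicit Arguments. Unset Strict Implicit. Unset Printing Implicit Defensive.
Import Order.TTheory GRing.Theory Num.Theory.
Local Open Scope ring_scope.
Local Open Scope classical_set_scope.

Definition trunc (R : realType) (M x : R) : R := if x <= M then x else 0.

(* Independence across jobs: the random vectors (X i j)_i, for j ranging over
   the jobs, are mutually independent (product rule on all rectangles;
   taking B i j = setT for the jobs outside a subfamily gives the product rule
   for every subfamily of jobs). *)
Definition jobs_independent (R : realType) d (T : measurableType d)
  (P : probability T R) (m n : nat) (X : 'I_m -> 'I_n -> T -> R) : Prop :=
  forall B : 'I_m -> 'I_n -> set R,
    (forall i j, measurable (B i j)) ->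
    P (\bigcap_(j in [set: 'I_n]) \bigcap_(i in [set: 'I_m]) (X i j @^-1` B i j))
    = (\prod_(j < n) P (\bigcap_(i in [set: 'I_m]) (X i j @^-1` B i j)))%E.

(* Main.v *)
Require Import Defs.
From HB Require Import structures.
From mathcomp Require Import all_boot all_order all_algebra.
From mathcomp Require Import all_classical all_reals all_analysis.
From mathcomp Require Import measurable_realfun.
From mathcomp.algebra_tactics Require Import ring lra.
Import Order.TTheory GRing.Theory Num.Theory.
Set Implicit Arguments. Unset Strict Implicit. Unset Printing Implicit Defensive.
Local Open Scope ring_scope.
Local Open Scope classical_set_scope.
Section P1.
Variable R : realType.
Implicit Types x y q : R.

Lemma powR_le x y q : 0 <= x -> x <= y -> 0 <= q -> x `^ q <= y `^ q.
Proof.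
move=> x0 xy q0; apply: (ge0_ler_powR q0); rewrite ?nnegrE //.
exact: le_trans xy.
Qed.

Lemma expR_le1Dx_mul y : 0 <= y -> expR y <= 1 + y * expR y.
Proof.
move=> y0; have h := expR_ge1Dx (- y).
have e := expRxMexpNx_1 y.
have ey := expR_gt0 y.
have : expR y * (1 - y) <= expR y * expR (- y) by rewrite ler_pM2l //.
rewrite e; nra.
Qed.

Lemma lnq_gt0 q : 1 <= q -> 0 < ln (q + 1).
Proof. move=> q1; apply: ln_gt0; lra. Qed.

Lemma lnq_le q : 1 <= q -> ln (q + 1) <= q.
Proof. by move=> q1; rewrite addrC; apply: le_ln1Dx; lra. Qed.

Definition KK q := q / ln (q + 1).
Definition rr q := expR (ln (q + 1) / 2).

Lemma KK_ge1 q : 1 <= q -> 1 <= KK q.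
Proof.
move=> q1; rewrite /KK ler_pdivlMr ?lnq_gt0 // mul1r; exact: lnq_le.
Qed.

Lemma rr_ge1 q : 1 <= q -> 1 <= rr q.
Proof.
move=> q1; rewrite /rr -[X in X <= _]expR0 ler_expR; apply: divr_ge0 => //.
exact: ltW (lnq_gt0 q1).
Qed.

Lemma rr_le q : 1 <= q -> rr q <= 2 * KK q.
Proof.
move=> q1; have l0 := lnq_gt0 q1.
have r1 := rr_ge1 q1.
have lnr : ln (rr q) = ln (q + 1) / 2 by rewrite /rr expRK.
have hr : ln (rr q) <= rr q - 1.
  have := @le_ln1Dx R (rr q - 1).
  have -> : 1 + (rr q - 1) = rr q by ring.
  apply; lra.
have rsq : rr q * rr q = q + 1.
  rewrite /rr -expRD.
  have -> : ln (q + 1) / 2 + ln (q + 1) / 2 = ln (q + 1) by field.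
  rewrite lnK // posrE; lra.
rewrite /KK mulrA ler_pdivlMr //.
have : ln (q + 1) <= 2 * (rr q - 1) by lra.
move=> h; have : rr q * ln (q + 1) <= rr q * (2 * (rr q - 1)).
  by rewrite ler_pM2l //; lra.
nra.
Qed.

Lemma key_pointwise q x : 1 <= q -> 0 <= x ->
  (1 + x) `^ q <= 1 + q * rr q * x + ((2 * KK q + 1) * x) `^ q.
Proof.
move=> q1 x0; have l0 := lnq_gt0 q1.
have r1 := rr_ge1 q1.
set d := ln (q + 1) / (2 * q).
have d0 : 0 < d by apply: divr_gt0 => //; lra.
have pw0 := powR_ge0 ((2 * KK q + 1) * x) q.
have [xd|dx] := leP x d.
- have h1 : (1 + x) `^ q <= expR (x * q).
    rewrite expRM; apply: powR_le => //; [lra| exact: expR_ge1Dx| lra].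
  have h2 : expR (x * q) <= rr q.
    rewrite /rr ler_expR /d.
    have -> : ln (q + 1) / 2 = d * q by rewrite /d; field; lra.
    by rewrite ler_pM2r //; lra.
  have h3 := expR_le1Dx_mul (mulr_ge0 x0 (ltW (lt_le_trans ltr01 q1))).
  have h4 : x * q * expR (x * q) <= x * q * rr q.
    by apply: ler_wpM2l => //; apply: mulr_ge0 => //; lra.
  have h5 : 0 <= q * rr q * x by apply: mulr_ge0 => //; apply: mulr_ge0; lra.
  have -> : q * rr q * x = x * q * rr q by ring.
  lra.
- have h1 : 1 <= 2 * KK q * x.
    have : ln (q + 1) < 2 * q * x.
      by move: dx; rewrite /d ltr_pdivrMr; [lra|lra].
    rewrite /KK => h.
    have -> : 2 * (q / ln (q + 1)) * x = (2 * q * x) / ln (q + 1) by field; lra.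
    rewrite ler_pdivlMr //; lra.
  have h2 : (1 + x) `^ q <= ((2 * KK q + 1) * x) `^ q.
    apply: powR_le; lra.
  have h5 : 0 <= q * rr q * x by apply: mulr_ge0 => //; apply: mulr_ge0; lra.
  lra.
Qed.
End P1.

Section P2.
Variable R : realType.
Implicit Types x y q : R.

Lemma prod_powR (I : Type) (s : seq I) (P : pred I) (F : I -> R) q :
  (forall j, 0 <= F j) ->
  (\prod_(j <- s | P j) F j) `^ q = \prod_(j <- s | P j) (F j `^ q).
Proof.
move=> F0; elim: s => [|a s IH]; first by rewrite !big_nil powR1.
rewrite !big_cons; case: (P a) => //.
rewrite powRM ?IH //; exact: prodr_ge0.
Qed.

Lemma one_sum_le_prod (I : Type) (s : seq I) (P : pred I) (F : I -> R) :
  (forall j, 0 <= F j) ->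
  1 + \sum_(j <- s | P j) F j <= \prod_(j <- s | P j) (1 + F j).
Proof.
move=> F0; elim: s => [|a s IH]; first by rewrite !big_nil addr0.
rewrite !big_cons; case: (P a) => //.
have S0 : 0 <= \sum_(j <- s | P j) F j by apply: sumr_ge0.
have Fa := F0 a.
apply: (@le_trans _ _ ((1 + F a) * (1 + \sum_(j <- s | P j) F j))).
  nra.
by apply: ler_wpM2l => //; lra.
Qed.

Lemma sum3_powR a b c q : 0 <= a -> 0 <= b -> 0 <= c -> 0 <= q ->
  (a + b + c) `^ q <= 3 `^ q * (a `^ q + b `^ q + c `^ q).
Proof.
move=> a0 b0 c0 q0.
have pa := powR_ge0 a q; have pb := powR_ge0 b q; have pc := powR_ge0 c q.
have key : forall z, 0 <= z -> a + b + c <= 3 * z -> z `^ q <= a `^ q + b `^ q + c `^ q ->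
  (a + b + c) `^ q <= 3 `^ q * (a `^ q + b `^ q + c `^ q).
  move=> z z0 h1 h2; apply: (le_trans (powR_le _ h1 q0)); first lra.
  rewrite powRM //; apply: ler_wpM2l => //; exact: powR_ge0.
have [ab|ba] := leP a b; have [bc|cb] := leP b c; have [ac|ca] := leP a c.
all: first [ apply: (key c) => //; lra | apply: (key b) => //; lra | apply: (key a) => //; lra ].
Qed.

Lemma powR_invq_le y A q : 1 <= q -> 0 <= y -> 0 < A ->
  y `^ q^-1 <= A `^ q^-1 * (1 + y / A).
Proof.
move=> q1 y0 A0.
have qi0 : 0 <= q^-1 by rewrite invr_ge0; lra.
have pA := powR_gt0 q^-1 A0.
have yA0 : 0 <= y / A by apply: divr_ge0 => //; lra.
rewrite {1}(_ : y = A * (y / A)); last by rewrite mulrC divfK // gt_eqF.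
rewrite powRM; [|lra|lra].
apply: ler_wpM2l; first lra.
have [yA|yA] := leP (y / A) 1.
  apply: (@le_trans _ _ 1); last lra.
  have := powR_le yA0 yA qi0; by rewrite powR1.
apply: (@le_trans _ _ (y / A)); last lra.
apply: ler1_powR; first lra.
rewrite invf_le1; lra.
Qed.

Lemma powR_invK z q : 0 <= z -> 0 < q -> (z `^ q) `^ q^-1 = z.
Proof.
move=> z0 q0; rewrite -powRrM mulfV ?powRr1 //; lra.
Qed.

Lemma powR_Kinv w q : 0 <= w -> 0 < q -> (w `^ q^-1) `^ q = w.
Proof.
move=> w0 q0; rewrite -powRrM mulVf ?powRr1 //; lra.
Qed.

End P2.

Section P3.
Variables (R : realType) (d : measure_display) (T : measurableType d)
  (P : probability T R).

Lemma Pfin (E : set T) : measurable E -> (fine (P E))%:E = P E.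
Proof. by move=> mE; rewrite fineK // fin_num_measure. Qed.

Lemma Pge0 (E : set T) : 0 <= fine (P E).
Proof. by apply: fine_ge0; apply: measure_ge0. Qed.

Lemma int_simple (I : finType) (w : I -> R) (E : I -> set T) :
  (forall k, 0 <= w k) -> (forall k, measurable (E k)) ->
  (\int[P]_x (\sum_k w k * \1_(E k) x)%:E = (\sum_k w k * fine (P (E k)))%:E)%E.
Proof.
move=> w0 mE.
under eq_integral do rewrite -sumEFin.
rewrite ge0_integral_sum //; last first.
- by move=> k x _; rewrite lee_fin mulr_ge0 // indicE.
- move=> k; apply/measurable_EFinP; apply: measurable_funM.
    exact: measurable_cst.
  exact: measurable_indic.
rewrite -sumEFin; apply: eq_bigr => k _.
under eq_integral do rewrite EFinM.
rewrite ge0_integralZl_EFin //.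
- by rewrite integral_indic // setIT EFinM Pfin.
- by apply/measurable_EFinP; exact: measurable_indic.
Qed.

Lemma int_one : (\int[P]_x (1%:E : \bar R) = 1)%E.
Proof.
have -> : (fun _ : T => (1%:E : \bar R)) = cst 1%E by [].
rewrite integral_cst // [X in (_ * X)%E](_ : _ = 1%E) ?mule1 //.
exact: probability_setT.
Qed.

Lemma EFin_affine (C a b u v : R) :
  (C%:E * (1 + a%:E * u%:E + b%:E * v%:E) = (C * (1 + a * u + b * v))%:E)%E.
Proof. by rewrite -!EFinM [in RHS]EFinM [in RHS]EFinD [in RHS]EFinD. Qed.

Ltac nn := repeat (first [apply: addr_ge0 | apply: mulr_ge0]); try done; auto.
Ltac sides := try solve [move=> ? _; rewrite lee_fin; nn
  | exact: measurable_cst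
  | apply/measurable_EFinP; repeat (first [apply: measurable_funD | apply: measurable_funM]);
    try done; exact: measurable_cst ].

Lemma int_affine (f g : T -> R) (C a b : R) :
  measurable_fun setT f -> measurable_fun setT g ->
  (forall x, 0 <= f x) -> (forall x, 0 <= g x) ->
  0 <= C -> 0 <= a -> 0 <= b ->
  (\int[P]_x (C * (1 + a * f x + b * g x))%:E =
   C%:E * (1 + a%:E * \int[P]_x (f x)%:E + b%:E * \int[P]_x (g x)%:E))%E.
Proof.
move=> mf mg f0 g0 C0 a0 b0.
under eq_integral do rewrite EFinM.
rewrite ge0_integralZl_EFin //; sides.
congr (_ * _)%E.
under eq_integral do rewrite EFinD.
rewrite ge0_integralD //; sides.
under eq_integral do rewrite EFinD.
rewrite ge0_integralD //; sides.
rewrite int_one.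
under eq_integral do rewrite EFinM.
rewrite ge0_integralZl_EFin //; sides.
under [X in (_ + _ + X)%E]eq_integral do rewrite EFinM.
rewrite ge0_integralZl_EFin //; sides.
Qed.

End P3.
Section Trunc.
Variable R : realType.

Lemma trunc_ge0 (M y : R) : 0 <= y -> 0 <= trunc M y.
Proof. by move=> y0; rewrite /trunc; case: ifP. Qed.

Lemma trunc_leM (M y : R) : 0 <= M -> trunc M y <= M.
Proof. by move=> M0; rewrite /trunc; case: ifP. Qed.

Lemma measurable_trunc (M : R) : measurable_fun setT (trunc M).
Proof.
rewrite /trunc; apply: measurable_fun_ifT.
- apply: measurable_fun_ler; [exact: measurable_id| exact: measurable_cst].
- exact: measurable_id.
- exact: measurable_cst.
Qed.

Lemma measurable_trunc_pre (M : R) (B : set R) : measurable B ->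
  measurable (trunc M @^-1` B).
Proof.
by move=> mB; have := measurable_trunc M measurableT mB; rewrite setTI.
Qed.
End Trunc.

Section Machine.
Variables (R : realType) (d : measure_display) (T : measurableType d)
  (P : probability T R) (m n : nat) (X : 'I_m -> 'I_n -> T -> R)
  (asg : 'I_n -> 'I_m) (q M : R).
Hypotheses (mX : forall i j, measurable_fun setT (X i j))
  (X0 : forall i j x, 0 <= X i j x) (ind : jobs_independent P X)
  (q1 : 1 <= q) (M0 : 0 < M).

Definition Xp i j x := trunc M (X i j x).

Lemma Xp_ge0 i j x : 0 <= Xp i j x.
Proof. exact: trunc_ge0. Qed.

Lemma Xp_leM i j x : Xp i j x <= M.
Proof. exact: trunc_leM (ltW M0). Qed.

Lemma mXp i j : measurable_fun setT (Xp i j).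
Proof. exact: measurableT_comp (measurable_trunc M) (mX i j). Qed.

Lemma mXpq i j : measurable_fun setT (fun x => Xp i j x `^ q).
Proof. exact: measurableT_comp (measurable_powR q) (mXp i j). Qed.

Lemma int_bounded (f : T -> R) (B : R) : measurable_fun setT f ->
  (forall x, 0 <= f x) -> (forall x, f x <= B) ->
  (\int[P]_x (f x)%:E = (fine (\int[P]_x (f x)%:E))%:E)%E.
Proof.
move=> mf f0 fB; rewrite fineK // ge0_fin_numE; last first.
  by apply: integral_ge0 => x _; rewrite lee_fin.
apply: (@le_lt_trans _ _ (\int[P]_x (cst B%:E) x)%E); last first.
rewrite integral_cst // [X in (_ * X)%E](_ : _ = 1%E) ?mule1 ?ltry //; exact: probability_setT.
apply: ge0_le_integral => //.
all: try (by move=> x _; rewrite lee_fin).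
all: try exact/measurable_EFinP.
all: try exact: measurable_cst.
Qed.

Definition mu i j := fine (\int[P]_x (Xp i j x)%:E).
Definition beta i j := fine (\int[P]_x ((Xp i j x) `^ q)%:E).

Lemma intXp i j : (\int[P]_x (Xp i j x)%:E = (mu i j)%:E)%E.
Proof.
apply: (int_bounded (B:=M)) => //; [exact: mXp|exact: Xp_ge0|exact: Xp_leM].
Qed.

Lemma intXpq i j : (\int[P]_x ((Xp i j x) `^ q)%:E = (beta i j)%:E)%E.
Proof.
apply: (int_bounded (B:=M `^ q)) => //; first exact: mXpq.
  by move=> x; apply: powR_ge0.
move=> x; have hq := q1; apply: powR_le; [exact: Xp_ge0|exact: Xp_leM|lra].
Qed.

Lemma mu_ge0 i j : 0 <= mu i j.
Proof. by apply: fine_ge0; apply: integral_ge0 => x _; rewrite lee_fin Xp_ge0. Qed.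

Lemma beta_ge0 i j : 0 <= beta i j.
Proof. by apply: fine_ge0; apply: integral_ge0 => x _; rewrite lee_fin powR_ge0. Qed.


Section Levels.
Variables (i : 'I_m) (t : R).
Hypothesis t0 : 0 < t.

Definition hh := t / (n.+1)%:R.
Definition NN := Num.Def.archi_bound (M / hh).
Definition LL := NN.+1.

Lemma hh_gt0 : 0 < hh.
Proof. by apply: divr_gt0 => //; rewrite ltr0n. Qed.

Definition Tset (l : nat) : set R :=
  [set y | l%:R * hh - hh < trunc M y <= l%:R * hh].

Lemma mTset l : measurable (Tset l).
Proof.
have -> : Tset l = trunc M @^-1` [set` `]l%:R * hh - hh, l%:R * hh]%R].
  by apply/seteqP; split => y /=; rewrite in_itv /=.
apply: measurable_trunc_pre; exact: measurable_itv.
Qed.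

Definition Bs (l : 'I_LL) (i' : 'I_m) (j : 'I_n) : set R :=
  if (asg j == i) && (i' == i) then Tset l else setT.

Definition AA (j : 'I_n) (l : 'I_LL) : set T :=
  \bigcap_(i' in [set: 'I_m]) (X i' j @^-1` Bs l i' j).

Definition cc (j : 'I_n) (l : 'I_LL) : R :=
  if asg j == i then (1 + l%:R * hh / t) `^ q else (l == 0 :> nat)%:R.

Definition UU (j : 'I_n) (x : T) : R := \sum_(l < LL) cc j l * \1_(AA j l) x.

Lemma mAA j l : measurable (AA j l).
Proof.
apply: fin_bigcap_measurable; first exact: finite_finset.
move=> i' _.
have mB : measurable (Bs l i' j).
  by rewrite /Bs; case: ifP => _; [exact: mTset| exact: measurableT].
by have := mX i' j measurableT mB; rewrite setTI.
Qed.

Lemma AA_in j l : asg j == i -> AA j l = [set x | l%:R * hh - hh < Xp i j x <= l%:R * hh].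
Proof.
move=> ji; apply/seteqP; split => x /=.
- by move=> /(_ i I); rewrite /Bs ji eqxx.
- move=> hx i' _; rewrite /Bs ji /=; case: eqP => [->|//]; exact: hx.
Qed.

Lemma AA_out j l : asg j != i -> AA j l = setT.
Proof.
move=> ji; apply/seteqP; split => x //= _ i' _.
by rewrite /Bs (negbTE ji).
Qed.

Lemma cc_ge0 j l : 0 <= cc j l.
Proof. by rewrite /cc; case: ifP => _; [exact: powR_ge0| exact: ler0n]. Qed.

Lemma level_exists y : 0 <= y -> y <= M ->
  exists l : 'I_LL, l%:R * hh - hh < y <= l%:R * hh.
Proof.
move=> y0 yM; have h0 := hh_gt0; have hM := M0.
have exN : exists k, y <= k%:R * hh.
  exists NN; have := @archi_boundP R (M / hh).
  rewrite ltr_pdivrMr // => /(_ (ltW (divr_gt0 hM h0))) => H.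
  rewrite /NN; lra.
have [k Pk minK] := find_ex_minn exN.
have kN : (k <= NN)%N.
  apply: minK; have := @archi_boundP R (M / hh).
  rewrite ltr_pdivrMr // => /(_ (ltW (divr_gt0 hM h0))) => H.
  rewrite /NN; lra.
exists (Ordinal (n:=LL) (m:=k) kN) => /=; rewrite Pk andbT.
case: k Pk minK kN => [|k] Pk minK kN; first by rewrite mul0r; lra.
have : ~~ (y <= k%:R * hh).
  by apply/negP => /minK; rewrite ltnn.
rewrite -ltNge -natr1 mulrDl mul1r => H; lra.
Qed.

Lemma UU_out j x : asg j != i -> UU j x = 1.
Proof.
move=> ji; rewrite /UU big_ord_recl /cc (negbTE ji) /= AA_out // indicE.
rewrite in_setT mulr1 big1 ?addr0 // => l _.
by rewrite AA_out // indicE in_setT mulr1.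
Qed.

Lemma in_AA j l x : asg j == i ->
  (x \in AA j l) = (l%:R * hh - hh < Xp i j x <= l%:R * hh).
Proof.
move=> ji; rewrite AA_in //; apply/idP/idP.
- by rewrite inE => /= ->.
- by move=> H; rewrite inE.
Qed.

Lemma UU_lb j x : asg j == i -> (1 + Xp i j x / t) `^ q <= UU j x.
Proof.
move=> ji; have [l /andP[hl1 hl2]] := level_exists (Xp_ge0 i j x) (Xp_leM i j x).
have ht := t0; have hq := q1.
rewrite /UU (bigD1 l) //= indicE in_AA // hl1 hl2 /= mulr1.
apply: (@le_trans _ _ (cc j l)); last first.
  rewrite lerDl; apply: sumr_ge0 => l' _; apply: mulr_ge0; first exact: cc_ge0.
  by rewrite indicE ler0n.
rewrite /cc ji; apply: powR_le; [|rewrite lerD2l|lra].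
- by have := Xp_ge0 i j x; move=> H; apply: addr_ge0 => //; apply: divr_ge0 => //; lra.
- by rewrite ler_pM2r ?invr_gt0.
Qed.

Lemma UU_ub j x : asg j == i ->
  UU j x <= (1 + hh / t) `^ q *
    (1 + q * rr q * (Xp i j x / t) + ((2 * KK q + 1) * (Xp i j x / t)) `^ q).
Proof.
move=> ji; have [l /andP[hl1 hl2]] := level_exists (Xp_ge0 i j x) (Xp_leM i j x).
have ht := t0; have hq := q1; have h0 := hh_gt0.
have y0 := Xp_ge0 i j x.
rewrite /UU (bigD1 l) //= indicE in_AA // hl1 hl2 /= mulr1.
rewrite big1 ?addr0; last first.
  move=> l' ll'; rewrite indicE in_AA //.
  case/boolP: (_ && _) => [/andP[h1 h2]|]; last by rewrite mulr0.
  exfalso; move: ll'; case: (ltngtP l l') => [lt|lt|/val_inj ->]; last by rewrite eqxx.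
  - have : (l%:R + 1 <= l'%:R :> R) by rewrite natr1 ler_nat.
    move=> H; have : l%:R * hh + hh <= l'%:R * hh by nra.
    lra.
  - have : (l'%:R + 1 <= l%:R :> R) by rewrite natr1 ler_nat.
    move=> H; have : l'%:R * hh + hh <= l%:R * hh by nra.
    lra.
have yt0 : 0 <= Xp i j x / t by apply: divr_ge0 => //; lra.
have ht0 : 0 <= hh / t by apply: divr_ge0; lra.
rewrite /cc ji.
apply: (@le_trans _ _ (((1 + hh / t) * (1 + Xp i j x / t)) `^ q)).
  apply: powR_le; [| |lra].
  - apply: addr_ge0 => //; apply: mulr_ge0; [apply: mulr_ge0 => //; lra| rewrite invr_ge0; lra].
  - have : l%:R * hh / t <= (Xp i j x + hh) / t by rewrite ler_pM2r ?invr_gt0 //; lra.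
    rewrite mulrDl => H; nra.
rewrite powRM; [|lra|lra].
apply: ler_wpM2l; first exact: powR_ge0.
exact: key_pointwise.
Qed.

Lemma mUU j : measurable_fun setT (UU j).
Proof.
rewrite /UU; apply: measurable_sum => l; apply: measurable_funM.
  exact: measurable_cst.
exact: measurable_indic (mAA j l).
Qed.

Lemma job_bound j : asg j == i ->
  \sum_(l < LL) cc j l * fine (P (AA j l)) <=
  expR (q * hh / t + (q * rr q / t * mu i j + ((2 * KK q + 1) / t) `^ q * beta i j)).
Proof.
move=> ji; have ht := t0; have hq := q1; have h0 := hh_gt0.
have hr := rr_ge1 hq; have hK := KK_ge1 hq.
set C := (1 + hh / t) `^ q.
set a := q * rr q / t.
set b := ((2 * KK q + 1) / t) `^ q.
have C0 : 0 <= C by exact: powR_ge0.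
have a0 : 0 <= a by apply: divr_ge0; [apply: mulr_ge0|]; lra.
have b0 : 0 <= b by exact: powR_ge0.
have H : ((\sum_(l < LL) cc j l * fine (P (AA j l)))%:E <=
     (C * (1 + a * mu i j + b * beta i j))%:E)%E.
  rewrite -int_simple //; last by [exact: mAA]; last by [exact: cc_ge0].
  apply: (@le_trans _ _ (\int[P]_x (C * (1 + a * Xp i j x + b * (Xp i j x `^ q)))%:E)%E).
    apply: ge0_le_integral => //.
    - by move=> x _; rewrite lee_fin; apply: sumr_ge0 => l _; apply: mulr_ge0;
        [exact: cc_ge0| rewrite indicE ler0n].
    - apply/measurable_EFinP; exact: (mUU j).
    - apply/measurable_EFinP; apply: measurable_funM; first exact: measurable_cst.
      apply: measurable_funD; last first.
        by apply: measurable_funM; [exact: measurable_cst| exact: mXpq].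
      apply: measurable_funD; first exact: measurable_cst.
      by apply: measurable_funM; [exact: measurable_cst| exact: mXp].
    - move=> x _; rewrite lee_fin.
      apply: (le_trans (UU_ub x ji)); rewrite -/C.
      apply: ler_wpM2l => //.
      have y0 := Xp_ge0 i j x.
      have -> : (2 * KK q + 1) * (Xp i j x / t) = (2 * KK q + 1) / t * Xp i j x by rewrite mulrA mulrAC.
      rewrite powRM; last by []; last by apply: divr_ge0; lra.
      rewrite -/b /a; apply: lerD => //; apply: lerD => //.
      by rewrite mulrA mulrAC.
  rewrite int_affine //; [|exact: mXp|exact: mXpq|exact: Xp_ge0|by move=> x; exact: powR_ge0].
  by rewrite intXp intXpq -!EFinM EFinM !EFinD.
rewrite lee_fin in H; apply: (le_trans H).
rewrite expRD; apply: ler_pM => //.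
- apply: addr_ge0; first apply: addr_ge0 => //; apply: mulr_ge0 => //.
  + exact: mu_ge0.
  + exact: beta_ge0.
- have -> : q * hh / t = hh / t * q by ring.
  rewrite /C expRM; apply: powR_le; last by lra.
  + apply: addr_ge0 => //; apply: divr_ge0; lra.
  + exact: expR_ge1Dx.
- rewrite -addrA; exact: expR_ge1Dx.
Qed.

Lemma prod_indic (F : 'I_n -> set T) x :
  \prod_j \1_(F j) x = \1_(\bigcap_(j in [set: 'I_n]) F j) x :> R.
Proof.
case: (pselect (forall j, F j x)) => [all|].
- rewrite big1; last by move=> j _; rewrite indicE mem_set.
  by rewrite indicE mem_set // => j _; exact: all.
- move=> /existsNP [j nj].
  rewrite (bigD1 j) //= indicE memNset // mul0r indicE memNset //.
  by move=> /(_ j I).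
Qed.

Definition EE (f : {ffun 'I_n -> 'I_LL}) : set T :=
  \bigcap_(j in [set: 'I_n]) AA j (f j).

Lemma mEE f : measurable (EE f).
Proof.
apply: fin_bigcap_measurable; first exact: finite_finset.
by move=> j _; exact: mAA.
Qed.

Lemma UU_expand x : \prod_j UU j x =
  \sum_(f : {ffun 'I_n -> 'I_LL}) (\prod_j cc j (f j)) * \1_(EE f) x.
Proof.
rewrite /UU bigA_distr_bigA; apply: eq_bigr => f _.
by rewrite big_split /= prod_indic.
Qed.

Lemma PEE f : fine (P (EE f)) = \prod_j fine (P (AA j (f j))).
Proof.
have mB : forall i' j, measurable (Bs (f j) i' j).
  by move=> i' j; rewrite /Bs; case: ifP => _; [exact: mTset| exact: measurableT].
have := ind mB; rewrite /EE /AA => ->.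
rewrite (eq_bigr (fun j => (fine (P (\bigcap_(i' in [set: 'I_m]) (X i' j @^-1` Bs (f j) i' j))))%:E)); last first.
  by move=> j _; rewrite Pfin //; exact: mAA.
by rewrite prodEFin.
Qed.

Lemma S_pointwise x :
  (\sum_(j < n | asg j == i) Xp i j x) `^ q <= t `^ q * \prod_j UU j x.
Proof.
have ht := t0; have hq := q1.
pose F j := if asg j == i then Xp i j x / t else 0.
have F0 j : 0 <= F j by rewrite /F; case: ifP => _ //; apply: divr_ge0;
  [exact: Xp_ge0| lra].
have eS : \sum_(j < n | asg j == i) Xp i j x = t * \sum_j F j.
  rewrite big_mkcond /= mulr_sumr; apply: eq_bigr => j _; rewrite /F.
  by case: ifP => _; [rewrite mulrC divfK // gt_eqF | rewrite mulr0].
have SF0 : 0 <= \sum_j F j by apply: sumr_ge0.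
rewrite eS.
apply: (@le_trans _ _ ((t * (1 + \sum_j F j)) `^ q)).
  apply: powR_le; [apply: mulr_ge0; lra| |lra].
  by apply: ler_wpM2l; lra.
rewrite powRM; [|lra|lra].
apply: ler_wpM2l; first exact: powR_ge0.
apply: (@le_trans _ _ ((\prod_j (1 + F j)) `^ q)).
  apply: powR_le; [lra| exact: one_sum_le_prod| lra].
rewrite prod_powR; last by move=> j; have := F0 j; lra.
apply: ler_prod => j _; rewrite powR_ge0 /=.
rewrite /F; case: ifP => ji.
- exact: UU_lb.
- by rewrite addr0 powR1 UU_out // ji.
Qed.

Definition bb j := if asg j == i then
  q * hh / t + (q * rr q / t * mu i j + ((2 * KK q + 1) / t) `^ q * beta i j)
  else 0.

Lemma machine_lvl :
  (\int[P]_x ((\sum_(j < n | asg j == i) Xp i j x) `^ q)%:E <=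
   (t `^ q * expR (\sum_j bb j))%:E)%E.
Proof.
have ht := t0; have hq := q1.
have w0 : forall f : {ffun 'I_n -> 'I_LL}, 0 <= t `^ q * \prod_j cc j (f j).
  move=> f; apply: mulr_ge0; first exact: powR_ge0.
  by apply: prodr_ge0 => j _; exact: cc_ge0.
apply: (@le_trans _ _ (\int[P]_x
    (\sum_(f : {ffun 'I_n -> 'I_LL}) (t `^ q * \prod_j cc j (f j)) * \1_(EE f) x)%:E)%E).
  apply: ge0_le_integral => //.
  - by move=> x _; rewrite lee_fin powR_ge0.
  - apply/measurable_EFinP; apply: measurableT_comp (measurable_powR q) _.
    rewrite [X in measurable_fun _ X](_ : _ = fun x => \sum_(j < n) (if asg j == i then Xp i j x else 0)); last first.
      by apply: funext => x; rewrite big_mkcond.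
    apply: measurable_sum => j; case: (asg j == i); [exact: mXp| exact: measurable_cst].
  - apply/measurable_EFinP; apply: measurable_sum => f; apply: measurable_funM.
      exact: measurable_cst.
    exact: measurable_indic (mEE f).
  - move=> x _; rewrite lee_fin; apply: (le_trans (S_pointwise x)).
    rewrite UU_expand mulr_sumr; apply: ler_sum => f _.
    by rewrite mulrA.
rewrite int_simple //; last by move=> f; exact: mEE.
rewrite lee_fin.
under eq_bigr do rewrite PEE -mulrA -big_split /=.
rewrite -mulr_sumr; apply: ler_wpM2l; first exact: powR_ge0.
rewrite -(bigA_distr_bigA (fun j l => cc j l * fine (P (AA j l)))) /=.
rewrite expR_sum; apply: ler_prod => j _; apply/andP; split.
  by apply: sumr_ge0 => l _; apply: mulr_ge0; [exact: cc_ge0| exact: Pge0].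
rewrite /bb; case: ifP => ji; first exact: job_bound.
rewrite expR0 big_ord_recl /cc ji /= AA_out ?ji //.
rewrite big1 ?addr0.
  by rewrite mul1r (_ : P _ = 1%E) //; exact: probability_setT.
by move=> l _; rewrite mul0r.
Qed.

Definition aa j := q * rr q / t * mu i j + ((2 * KK q + 1) / t) `^ q * beta i j.

Lemma sum_bb : \sum_j bb j <= q + \sum_(j < n | asg j == i) aa j.
Proof.
have ht := t0; have hq := q1.
have u0 : 0 <= q * hh / t by apply: divr_ge0; [apply: mulr_ge0|]; [lra| exact: ltW hh_gt0| lra].
rewrite /bb -big_mkcond /= big_split /= lerD2r.
apply: (@le_trans _ _ (\sum_(j < n) (q * hh / t))).
  rewrite big_mkcond /=; apply: ler_sum => j _.
  by case: ifP.
rewrite sumr_const card_ord /hh.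
have n0 : 0 < (n.+1)%:R :> R by rewrite ltr0n.
have -> : q * (t / (n.+1)%:R) / t = q / (n.+1)%:R by field; rewrite (gt_eqF ht) andbT addrC natr1 pnatr_eq0.
set N := (n.+1)%:R.
have e : q / N * n%:R = q / N *+ n := mulr_natr _ _.
have eN : N = n%:R + 1 by rewrite /N natr1.
rewrite -e mulrAC ler_pdivrMr // ler_pM2l; last lra.
lra.
Qed.

Lemma machine_bound :
  (\int[P]_x ((\sum_(j < n | asg j == i) Xp i j x) `^ q)%:E <=
   (t `^ q * expR (q + \sum_(j < n | asg j == i) aa j))%:E)%E.
Proof.
apply: (le_trans machine_lvl); rewrite lee_fin; apply: ler_wpM2l.
  exact: powR_ge0.
by rewrite ler_expR; exact: sum_bb.
Qed.

End Levels.

Definition mu' i := \sum_(j < n | asg j == i) mu i j.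
Definition B' i := \sum_(j < n | asg j == i) beta i j.
Definition SS i x := \sum_(j < n | asg j == i) Xp i j x.

Lemma mSSq i : measurable_fun setT (fun x => SS i x `^ q).
Proof.
apply: measurableT_comp (measurable_powR q) _.
rewrite [X in measurable_fun _ X](_ : _ = fun x => \sum_(j < n) (if asg j == i then Xp i j x else 0)); last first.
  by apply: funext => x; rewrite /SS big_mkcond.
apply: measurable_sum => j; case: (asg j == i); [exact: mXp| exact: measurable_cst].
Qed.

Lemma mu'_ge0 i : 0 <= mu' i.
Proof. by apply: sumr_ge0 => j _; exact: mu_ge0. Qed.

Lemma B'_ge0 i : 0 <= B' i.
Proof. by apply: sumr_ge0 => j _; exact: beta_ge0. Qed.

Lemma per_i (i : 'I_m) :
  (\int[P]_x (SS i x `^ q)%:E <=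
   (expR (3 * q) * 3 `^ q * (rr q `^ q * mu' i `^ q + (2 * KK q + 1) `^ q * B' i
     + M `^ q / m%:R))%:E)%E.
Proof.
have hq := q1; have hM := M0.
have q0 : 0 < q by lra.
have hr := rr_ge1 hq; have hK := KK_ge1 hq.
have m0 : 0 < m%:R :> R by rewrite ltr0n; exact: (leq_ltn_trans (leq0n i) (ltn_ord i)).
have Mq0 : 0 < M `^ q / m%:R by apply: divr_gt0 => //; exact: powR_gt0.
set eta := (M `^ q / m%:R) `^ q^-1.
have eta0 : 0 < eta by exact: powR_gt0.
set Bq := B' i `^ q^-1.
have Bq0 : 0 <= Bq by exact: powR_ge0.
have mu0 := mu'_ge0 i.
set t := rr q * mu' i + (2 * KK q + 1) * Bq + eta.
have t1 : rr q * mu' i <= t.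
  have : 0 <= (2 * KK q + 1) * Bq by apply: mulr_ge0 => //; lra.
  rewrite /t; lra.
have t2 : (2 * KK q + 1) * Bq <= t.
  have : 0 <= rr q * mu' i by apply: mulr_ge0 => //; lra.
  rewrite /t; lra.
have t0 : 0 < t.
  have : 0 <= (2 * KK q + 1) * Bq by apply: mulr_ge0 => //; lra.
  have : 0 <= rr q * mu' i by apply: mulr_ge0 => //; lra.
  rewrite /t; lra.
apply: (le_trans (machine_bound i t0)); rewrite lee_fin.
have eaa : \sum_(j < n | asg j == i) aa i t j =
    q * (rr q * mu' i / t) + ((2 * KK q + 1) * Bq / t) `^ q.
  rewrite /aa big_split /= -!mulr_sumr -/(mu' i) -/(B' i).
  rewrite [X in _ + X = _](_ : _ = ((2 * KK q + 1) / t * Bq) `^ q); last first.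
    rewrite [in RHS]powRM; [|apply: divr_ge0; lra|done].
    by rewrite /Bq powR_Kinv //; exact: B'_ge0.
  by congr (_ + _); [ring| congr (_ `^ _); ring].
have e1 : rr q * mu' i / t <= 1 by rewrite ler_pdivrMr // mul1r.
have e2 : ((2 * KK q + 1) * Bq / t) `^ q <= 1.
  apply: (@le_trans _ _ (1 `^ q)); last by rewrite powR1.
  apply: powR_le; [|by rewrite ler_pdivrMr // mul1r|lra].
  by apply: divr_ge0; [apply: mulr_ge0|]; lra.
have : q + \sum_(j < n | asg j == i) aa i t j <= 3 * q.
  rewrite eaa; have : q * (rr q * mu' i / t) <= q * 1 by rewrite ler_pM2l.
  lra.
rewrite -ler_expR => E.
rewrite -mulrA [t `^ q * _]mulrC; apply: ler_pM; [exact: expR_ge0|exact: powR_ge0|exact: E|].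
apply: (le_trans (sum3_powR _ _ _ _)) => //.
- by apply: mulr_ge0; lra.
- by apply: mulr_ge0; lra.
- lra.
- lra.
apply: ler_wpM2l; first exact: powR_ge0.
rewrite !powRM; [|lra|lra|lra|lra].
rewrite /Bq powR_Kinv; last lra; last exact: B'_ge0.
by rewrite /eta powR_Kinv; lra.
Qed.

Definition ZZ := expR 3 * 3 * (3 * KK q) * 35 * 2 * M.

Lemma EY_bound :
  \sum_(i < m) mu' i `^ q <= 2 `^ (q + 2) * M `^ q ->
  \sum_(i < m) B' i <= 3 * (2 `^ (q + 1) + 8) * M `^ q ->
  (\int[P]_x (\sum_(i < m) SS i x `^ q)%:E <= (ZZ `^ q)%:E)%E.
Proof.
move=> H1 H2.
have hq := q1; have hM := M0; have q0 : 0 < q by lra.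
have hK := KK_ge1 hq; have hr := rr_ge1 hq; have hrK := rr_le hq.
under eq_integral do rewrite -sumEFin.
rewrite ge0_integral_sum //; last first.
- by move=> i x _; rewrite lee_fin powR_ge0.
- by move=> i; apply/measurable_EFinP; exact: mSSq.
apply: le_trans; first by apply: lee_sum => i _; exact: per_i.
rewrite sumEFin lee_fin.
set E3 := expR (3 * q); set T3 := 3 `^ q.
have E30 : 0 < E3 by exact: expR_gt0.
have T30 : 0 < T3 by apply: powR_gt0; lra.
rewrite -mulr_sumr !big_split /= -!mulr_sumr sumr_const card_ord.
have em : M `^ q / m%:R *+ m <= M `^ q.
  case: (m) => [|k]; first by rewrite mulr0n; exact: powR_ge0.
  by rewrite -mulr_natr divfK // pnatr_eq0.
set K3 := (3 * KK q) `^ q.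
set P2 := 2 `^ q.
set F := 35 `^ q.
set Mq := M `^ q.
have Mq0 : 0 < Mq by exact: powR_gt0.
have P2ge : 2 <= P2 by apply: le1r_powR; lra.
have Fge : 35 <= F by apply: le1r_powR; lra.
have K3ge : 1 <= K3.
  rewrite /K3; apply: (@le_trans _ _ (1 `^ q)); first by rewrite powR1.
  apply: powR_le; lra.
have A1 : rr q `^ q <= K3 by apply: powR_le; lra.
have A2 : (2 * KK q + 1) `^ q <= K3 by apply: powR_le; lra.
have e4 : 2 `^ (q + 2) = P2 * 4.
  rewrite powRD; last by apply/implyP => _; rewrite gt_eqF //; lra.
  rewrite -/P2 powR_mulrn; [ring|lra].
have e2 : 2 `^ (q + 1) = P2 * 2.
  rewrite powRD; last by apply/implyP => _; rewrite gt_eqF //; lra.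
  by rewrite -/P2 powRr1.
rewrite e4 -/Mq in H1; rewrite e2 -/Mq in H2.
have S1 : 0 <= \sum_(i < m) mu' i `^ q by apply: sumr_ge0 => i _; exact: powR_ge0.
have S2 : 0 <= \sum_(i < m) B' i by apply: sumr_ge0 => i _; exact: B'_ge0.
have inner : rr q `^ q * \sum_(i < m) mu' i `^ q
    + (2 * KK q + 1) `^ q * \sum_(i < m) B' i + M `^ q / m%:R *+ m <= K3 * F * P2 * Mq.
  apply: (@le_trans _ _ (K3 * (\sum_(i < m) mu' i `^ q + \sum_(i < m) B' i + Mq))).
    have : rr q `^ q * \sum_(i < m) mu' i `^ q <= K3 * \sum_(i < m) mu' i `^ q.
      by apply: ler_wpM2r.
    have : (2 * KK q + 1) `^ q * \sum_(i < m) B' i <= K3 * \sum_(i < m) B' i.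
      by apply: ler_wpM2r.
    have : Mq <= K3 * Mq by rewrite ler_peMl //; lra.
    rewrite -/Mq in em; move: em; set Mm := (_ *+ m) => em; lra.
  rewrite -!mulrA; apply: ler_wpM2l; first lra.
  have : \sum_(i < m) mu' i `^ q + \sum_(i < m) B' i + Mq <= (10 * P2 + 25) * Mq.
    lra.
  move=> H; apply: (le_trans H); rewrite mulrA; apply: ler_wpM2r; first lra.
  nra.
have ZZq : ZZ `^ q = E3 * T3 * (K3 * F * P2 * Mq).
  have a0 : 0 <= expR 3 :> R by exact: expR_ge0.
  have b0 : 0 <= 3 :> R by lra.
  have c0 : 0 <= 3 * KK q by lra.
  have d0 : 0 <= 35 :> R by lra.
  have e0 : 0 <= 2 :> R by lra.
  have f0 : 0 <= M by lra.
  have ab := mulr_ge0 a0 b0.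
  have abc := mulr_ge0 ab c0.
  have abcd := mulr_ge0 abc d0.
  have abcde := mulr_ge0 abcd e0.
  rewrite /ZZ (powRM _ abcde f0) (powRM _ abcd e0) (powRM _ abc d0).
  rewrite (powRM _ ab c0) (powRM _ a0 b0).
  rewrite /E3 expRM /T3 /K3 /F /P2 /Mq; ring.
rewrite ZZq; apply: ler_wpM2l; [apply: mulr_ge0; lra|]. rewrite mulrnAr; exact: inner.
Qed.

End Machine.

Theorem mainTheorem15 (R : realType) :
  exists c : R,
  forall (d : measure_display) (T : measurableType d) (P : probability T R)
    (m n : nat) (X : 'I_m -> 'I_n -> T -> R) (asg : 'I_n -> 'I_m) (q M : R),
    (forall i j, measurable_fun setT (X i j)) ->
    (forall i j x, 0 <= X i j x) ->
    jobs_independent P X ->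
    1 <= q -> 0 < M ->
    let alpha := 2 `^ (q + 1) + 8 in
    let X' := fun i j x => trunc M (X i j x) in
    \sum_(i < m) (\sum_(j < n | asg j == i)
        fine (\int[P]_x (X' i j x)%:E)) `^ q <= 2 `^ (q + 2) * M `^ q ->
    \sum_(i < m) \sum_(j < n | asg j == i)
        fine (\int[P]_x ((X' i j x) `^ q)%:E) <= 3 * alpha * M `^ q ->
    (\int[P]_x ((\sum_(i < m) (\sum_(j < n | asg j == i) X' i j x) `^ q)
                  `^ q^-1)%:E
     <= (c * (q / ln (q + 1)) * M)%:E)%E.
Proof.
exists (2 * (expR 3 * 3 * 3 * 35 * 2)).
move=> d T P m n X asg q M mX X0 ind q1 M0 alpha X' H1 H2.
have hq := q1; have hM := M0; have q0 : 0 < q by lra.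
have hK := KK_ge1 hq.
have EY := EY_bound mX X0 ind q1 M0 H1 H2.
set Z := ZZ q M in EY.
have Z0 : 0 < Z.
  have e3 : 0 < expR 3 :> R by exact: expR_gt0.
  rewrite /Z /ZZ; repeat apply: mulr_gt0; try lra; rewrite invr_gt0; exact: lnq_gt0.
have Zq0 : 0 < Z `^ q by exact: powR_gt0.
set Y := fun x => \sum_(i < m) SS X asg M i x `^ q.
have Y0 : forall x, 0 <= Y x by move=> x; apply: sumr_ge0 => i _; exact: powR_ge0.
have mY : measurable_fun setT Y.
  by apply: measurable_sum => i; exact: (@mSSq _ _ _ _ _ X asg q M mX i).
have eI : (\int[P]_x (Y x)%:E = (fine (\int[P]_x (Y x)%:E))%:E)%E.
  rewrite fineK // ge0_fin_numE; last by apply: integral_ge0 => x _; rewrite lee_fin.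
  by apply: (le_lt_trans EY); exact: ltry.
apply: (@le_trans _ _ (\int[P]_x (Z * (1 + (Z `^ q)^-1 * Y x + 0 * Y x))%:E)%E).
  apply: ge0_le_integral => //.
  - by move=> x _; rewrite lee_fin powR_ge0.
  - apply/measurable_EFinP; apply: measurableT_comp (measurable_powR _) _.
    exact: mY.
  - apply/measurable_EFinP; apply: measurable_funM; first exact: measurable_cst.
    apply: measurable_funD; last by apply: measurable_funM => //; exact: measurable_cst.
    apply: measurable_funD; first exact: measurable_cst.
    by apply: measurable_funM => //; exact: measurable_cst.
  - move=> x _; rewrite lee_fin mul0r addr0.
    have := powR_invq_le hq (Y0 x) Zq0.
    rewrite powR_invK; [|lra|lra]. by rewrite (mulrC (Z `^ q)^-1).
rewrite int_affine //; last by rewrite invr_ge0; lra.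
  2: lra.
rewrite eI EFin_affine.
set y := fine (\int[P]_x (Y x)%:E).
rewrite lee_fin.
rewrite mul0r addr0.
have : y <= Z `^ q by rewrite -lee_fin -eI.
move=> HY.
have : (Z `^ q)^-1 * y <= 1.
  by rewrite mulrC ler_pdivrMr // mul1r.
move=> HY2.
have -> : 2 * (expR 3 * 3 * 3 * 35 * 2) * (q / ln (q + 1)) * M = 2 * Z.
  by rewrite /Z /ZZ /KK; ring.
have : Z * (1 + (Z `^ q)^-1 * y) <= Z * 2.
  by apply: ler_wpM2l; lra.
lra.
Qed.
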